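(* Let $\Omega$ be a countably infinite set and $G$ a subgroup of $S=\mathrm{Sym}(\Omega)$. Suppose there exist two sequences $(\alpha_i)_{i\in\omega},(\beta_i)_{i\in\omega}$ of elements of $\Omega$, all of the elements $\alpha_i,\beta_i$ being distinct, such that for every $(\gamma_i)\in\prod_{i\in\omega}\{\alpha_i,\beta_i\}$ there exists $g\in G$ with $\gamma_i=\alpha_ig$ for all $i$. Then $S_{(A_0)}\preccurlyeq G$, where $A_0$ is a partition of $\Omega$ having infinitely many $1$-element members, infinitely many $2$-element members, and no other members.
   Context: $\mathrm{Sym}(\Omega)$ is the group of all permutations of $\Omega$, acting on the right. For a partition $A$ of $\Omega$, $S_{(A)}=\{f\in S:\Sigma f=\Sigma\ \forall\Sigma\in A\}$ (such $A_0$ is unique up to a permutation of $\Omega$, so $S_{(A_0)}$ is determined up to conjugacy). For subgroups $G_1,G_2\le S$, $G_1\preccurlyeq G_2$ means there is a finite $U\subseteq S$ with $G_1\le\langle G_2\cup U\rangle$. *)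

(* Defs.v *)
From mathcomp Require Import all_boot.
From mathcomp Require Import boolp classical_sets functions cardinality.
Set Implicit Arguments. Unset Strict Implicit. Unset Printing Implicit Defensive.
Local Open Scope classical_set_scope.

(* Permutations of Omega are bijective functions Omega -> Omega; a permutation
   g acts on the right, alpha g := g alpha. *)
Definition Sym (Omega : Type) : set (Omega -> Omega) := [set f | bijective f].
Arguments Sym Omega : clear implicits.

Definition is_subgroup (Omega : Type) (G : set (Omega -> Omega)) : Prop :=
  G `<=` Sym Omega /\ G id /\
  (forall f g, G f -> G g -> G (g \o f)) /\
  (forall f, G f -> exists2 h, G h & cancel f h /\ cancel h f).

Definition gen (Omega : Type) (X : set (Omega -> Omega)) : set (Omega -> Omega) :=
  [set f | forall H, is_subgroup H -> X `<=` H -> H f].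

Definition preceq (Omega : Type) (G1 G2 : set (Omega -> Omega)) : Prop :=
  exists U : set (Omega -> Omega),
    finite_set U /\ U `<=` Sym Omega /\ G1 `<=` gen (G2 `|` U).

Definition is_partition (Omega : Type) (A : set (set Omega)) : Prop :=
  (forall B, A B -> B !=set0) /\
  (forall B C, A B -> A C -> B `&` C !=set0 -> B = C) /\
  (forall x, exists B, A B /\ B x).

Definition part_stab (Omega : Type) (A : set (set Omega)) : set (Omega -> Omega) :=
  [set f | Sym Omega f /\ forall B, A B -> f @` B = B].

Definition singleton_block (Omega : Type) (B : set Omega) : Prop :=
  exists x, B = [set x].
Definition pair_block (Omega : Type) (B : set Omega) : Prop :=
  exists x y, x <> y /\ B = [set x; y].

Definition is_A0 (Omega : Type) (A : set (set Omega)) : Prop :=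
  is_partition A /\
  infinite_set [set B | A B /\ singleton_block B] /\
  infinite_set [set B | A B /\ pair_block B] /\
  (forall B, A B -> singleton_block B \/ pair_block B).

(* Main.v *)
Require Import Defs.
From mathcomp Require Import all_boot zify.
From mathcomp Require Import boolp classical_sets functions cardinality.
Local Open Scope classical_set_scope.

Section Swaps.
Variables (Omega : Type) (alpha beta : nat -> Omega).
Hypotheses (Halpha : injective alpha) (Hbeta : injective beta)
  (Hab : forall i j, alpha i <> beta j).

Definition idx (f : nat -> Omega) (w : Omega) : option nat :=
  match pselect (exists i, w = f i) with
  | left h => Some (projT1 (cid h))
  | right _ => None
  end.

Lemma idx_val f i : injective f -> idx f (f i) = Some i.
Proof.
move=> fi; rewrite /idx; case: pselect => [h|[]]; last by exists i.
by case: (cid h) => j /= /fi ->.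
Qed.

Lemma idx_none f w : (forall i, w <> f i) -> idx f w = None.
Proof. by move=> h; rewrite /idx; case: pselect => // -[i e]; case: (h i e). Qed.

Definition Sw (e : nat -> bool) (w : Omega) : Omega :=
  match idx alpha w with
  | Some i => if e i then beta i else w
  | None => match idx beta w with
            | Some i => if e i then alpha i else w
            | None => w end
  end.

Lemma SwA e i : Sw e (alpha i) = if e i then beta i else alpha i.
Proof. by rewrite /Sw idx_val. Qed.
Lemma SwB e i : Sw e (beta i) = if e i then alpha i else beta i.
Proof.
rewrite /Sw idx_none ?idx_val // => j h; exact: (Hab _ _ (esym h)).
Qed.
Lemma SwO e w : (forall i, w <> alpha i /\ w <> beta i) -> Sw e w = w.
Proof.
by move=> h; rewrite /Sw !idx_none // => i; have [] := h i.
Qed.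

Lemma ab_cases w : (exists i, w = alpha i) \/ (exists i, w = beta i) \/
  (forall i, w <> alpha i /\ w <> beta i).
Proof.
case: (pselect (exists i, w = alpha i)) => [|ha]; first by left.
case: (pselect (exists i, w = beta i)) => [|hb]; first by right; left.
right; right => i; split => h; [apply: ha|apply: hb]; by exists i.
Qed.

Lemma Sw_comp e1 e2 : Sw e1 \o Sw e2 = Sw (fun j => e1 j (+) e2 j).
Proof.
apply: funext => w /=.
case: (ab_cases w) => [[i ->]|[[i ->]|h]].
- rewrite SwA SwA; case: (e2 i); rewrite ?SwA ?SwB; by case: (e1 i).
- rewrite SwB SwB; case: (e2 i); rewrite ?SwA ?SwB; by case: (e1 i).
- by rewrite !SwO.
Qed.

Definition xp (s : nat -> nat) (w : Omega) : Omega :=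
  match idx alpha w with Some i => alpha (s i) | None => w end.

Lemma xpA s i : xp s (alpha i) = alpha (s i).
Proof. by rewrite /xp idx_val. Qed.

Lemma xp_bij s : involutive s -> bijective (xp s).
Proof.
move=> si; exists (xp s) => w; rewrite /xp;
  case: (pselect (exists i, w = alpha i)) => [[i ->]|h];
  rewrite ?idx_val ?si // !idx_none // => i e; apply: h; by exists i.
Qed.


Definition gam (c : nat -> bool) i := if c i then beta i else alpha i.

Lemma conj_exists (G H : set (Omega -> Omega)) s c :
  is_subgroup H -> G `<=` H -> H (xp s) ->
  (exists2 g, G g & forall i, g (alpha i) = gam c i) ->
  (forall f, G f -> exists2 h, G h & cancel f h /\ cancel h f) ->
  exists C, [/\ H C, (forall i, C (alpha i) = if c i then alpha i else gam c (s i)),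
     (forall i, C (beta i) = if c i then gam c (s i) else beta i) &
     (forall w, (forall i, w <> alpha i /\ w <> beta i) -> C w = w)].
Proof.
move=> [_ [_ [Hc _]]] GH Hx [g Gg gE] Ginv.
have [h Gh [gh hg]] := Ginv g Gg.
exists (g \o (xp s \o h)).
have key : forall i, (g \o (xp s \o h)) (gam c i) = gam c (s i).
  by move=> i /=; rewrite -gE gh xpA gE.
have fix0 : forall w, (forall i, w <> gam c i) -> (g \o (xp s \o h)) w = w.
  move=> w hw /=; rewrite /xp idx_none ?hg // => i ei.
  by apply: (hw i); rewrite -gE -ei hg.
split.
- exact: (Hc _ _ (Hc _ _ (GH _ Gh) Hx) (GH _ Gg)).
- move=> i; case ci: (c i); last by rewrite -key /gam ci.
  apply: fix0 => j; rewrite /gam; case cj: (c j) => e.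
    exact: (Hab _ _ e).
  by move: e => /Halpha ei; rewrite ei cj in ci.
- move=> i; case ci: (c i); first by rewrite -key /gam ci.
  apply: fix0 => j; rewrite /gam; case cj: (c j) => e.
    by move: e => /Hbeta ei; rewrite ei cj in ci.
  exact: (Hab _ _ (esym e)).
- move=> w hw; apply: fix0 => j; rewrite /gam; case: (c j); by have [] := hw j.
Qed.


Lemma Sw_in (G H : set (Omega -> Omega)) s (e : nat -> bool) :
  is_subgroup H -> G `<=` H -> H (xp s) -> involutive s ->
  (forall j, e (s j) = e j) -> (forall j, e j -> s j != j) ->
  (forall c, exists2 g, G g & forall i, g (alpha i) = gam c i) ->
  (forall f, G f -> exists2 h, G h & cancel f h /\ cancel h f) ->
  H (Sw e).
Proof.
move=> HH GH Hx hs He Hne Hr Gi.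
have [C1 [H1 A1 B1 O1]] := @conj_exists G H s (fun _ => false) HH GH Hx (Hr _) Gi.
have [C2 [H2 A2 B2 O2]] := @conj_exists G H s e HH GH Hx (Hr _) Gi.
have [C3 [H3 A3 B3 O3]] := @conj_exists G H s (fun i => e i && (i < s i)%N) HH GH Hx (Hr _) Gi.
have [C4 [H4 A4 B4 O4]] := @conj_exists G H s (fun i => e i && (s i < i)%N) HH GH Hx (Hr _) Gi.
have [_ [_ [Hc _]]] := HH.
suff -> : Sw e = C1 \o (C2 \o (C3 \o C4)).
  exact: (Hc _ _ (Hc _ _ (Hc _ _ H4 H3) H2) H1).
apply: funext => w /=.
case: (ab_cases w) => [[j ->]|[[j ->]|h]]; last by rewrite SwO // !(O1, O2, O3, O4).
- rewrite SwA.
  have ek := He j; have hj := hs j.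
  case ej: (e j).
  + have [l1|l2|eq] := ltngtP j (s j); last by move: (Hne j); rewrite ej -eq eqxx => /(_ isT).
    * have t1 : (j < s j)%N = true by [].
      have t2 : (s j < j)%N = false by rewrite ltnNge ltnW.
      by do 10 (try rewrite A1; try rewrite A2; try rewrite A3; try rewrite A4; try rewrite B1; try rewrite B2; try rewrite B3; try rewrite B4; try rewrite /gam; try rewrite /= ?hj ?ej ?ek ?t1 ?t2 /=).
    * have t2 : (s j < j)%N = true by [].
      have t1 : (j < s j)%N = false by rewrite ltnNge ltnW.
      by do 10 (try rewrite A1; try rewrite A2; try rewrite A3; try rewrite A4; try rewrite B1; try rewrite B2; try rewrite B3; try rewrite B4; try rewrite /gam; try rewrite /= ?hj ?ej ?ek /= ?t1 ?t2 /=).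
  + by do 10 (try rewrite A1; try rewrite A2; try rewrite A3; try rewrite A4; try rewrite B1; try rewrite B2; try rewrite B3; try rewrite B4; try rewrite /gam; try rewrite /= ?hj ?ej ?ek /=).
- rewrite SwB.
  have ek := He j; have hj := hs j.
  case ej: (e j).
  + have [l1|l2|eq] := ltngtP j (s j); last by move: (Hne j); rewrite ej -eq eqxx => /(_ isT).
    * have t1 : (j < s j)%N = true by [].
      have t2 : (s j < j)%N = false by rewrite ltnNge ltnW.
      by do 10 (try rewrite A1; try rewrite A2; try rewrite A3; try rewrite A4; try rewrite B1; try rewrite B2; try rewrite B3; try rewrite B4; try rewrite /gam; try rewrite /= ?hj ?ej ?ek ?t1 ?t2 /=).
    * have t2 : (s j < j)%N = true by [].
      have t1 : (j < s j)%N = false by rewrite ltnNge ltnW.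
      by do 10 (try rewrite A1; try rewrite A2; try rewrite A3; try rewrite A4; try rewrite B1; try rewrite B2; try rewrite B3; try rewrite B4; try rewrite /gam; try rewrite /= ?hj ?ej ?ek /= ?t1 ?t2 /=).
  + by do 10 (try rewrite A1; try rewrite A2; try rewrite A3; try rewrite A4; try rewrite B1; try rewrite B2; try rewrite B3; try rewrite B4; try rewrite /gam; try rewrite /= ?hj ?ej ?ek /=).
Qed.


Fixpoint zp (Y : nat -> bool) (m : nat) : bool :=
  match m with 0 => Y 0 | m'.+1 => zp Y m' (+) Y m'.+1 end.

Definition sE (j : nat) := if odd j then j.-1 else j.+1.
Definition sO (j : nat) := if j == 0 then 0 else if odd j then j.+1 else j.-1.

Lemma sE_inv : involutive sE.
Proof.
move=> j; rewrite /sE; case oj: (odd j).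
  have -> : odd j.-1 = false by lia.
  lia.
have -> : odd j.+1 = true by lia.
lia.
Qed.
Lemma sO_inv : involutive sO.
Proof.
move=> j; rewrite /sO; case: (j =P 0) => [->//|/eqP j0].
case oj: (odd j).
  by have -> : odd j.+1 = false by lia.
have -> : (j.-1 == 0) = false by apply/negbTE; move: j0 oj; lia.
have -> : odd j.-1 = true by move: j0 oj; lia.
by move: j0; lia.
Qed.

Lemma Sw_tgt (G H : set (Omega -> Omega)) (Y : nat -> bool) :
  is_subgroup H -> G `<=` H -> H (xp sE) -> H (xp sO) ->
  (forall c, exists2 g, G g & forall i, g (alpha i) = gam c i) ->
  (forall f, G f -> exists2 h, G h & cancel f h /\ cancel h f) ->
  H (Sw (fun j => ~~ odd j && Y j./2)).
Proof.
move=> HH GH HE HO Hr Gi.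
have [_ [_ [Hc _]]] := HH.
have h1 : H (Sw (fun j => zp Y j./2)).
  apply: (@Sw_in G H sE _ HH GH HE sE_inv) => // j.
    by rewrite /sE; case: ifP => oj; congr zp; lia.
  by rewrite /sE; case: ifP => oj _; apply/eqP; lia.
have h2 : H (Sw (fun j => (j != 0) && zp Y (j.-1)./2)).
  apply: (@Sw_in G H sO _ HH GH HO sO_inv) => // j.
    rewrite /sO; case: ifP => j0 //; case: ifP => oj.
      by rewrite /=; congr zp; lia.
    have -> : (j.-1 != 0) = true by move: j0 oj; lia.
    by rewrite /=; congr zp; lia.
  rewrite /sO; case/andP => j0 _; rewrite (negbTE j0).
  by case: ifP => oj; move: j0 oj; lia.
have := Hc _ _ h2 h1; rewrite Sw_comp.
congr (H (Sw _)); apply: funext => j.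
have [m [->|->]] : exists m, j = m.*2 \/ j = m.*2.+1.
  by exists j./2; case: (odd j) / boolP => oj; [right|left]; lia.
- have -> : odd m.*2 = false by lia.
  have -> : (m.*2)./2 = m by lia.
  case: m => [|m] /=; first by rewrite addbF.
  have -> : uphalf m.*2 = m by lia.
  by case: (Y m.+1); case: (zp Y m).
- have -> : odd m.*2.+1 = true by lia.
  have -> : (m.*2.+1)./2 = m by lia.
  have -> : (m.*2.+1.-1)./2 = m by lia.
  by rewrite /= addbb.
Qed.

End Swaps.
Lemma inj_surj_bij (A B : Type) (f : A -> B) :
  injective f -> (forall y, exists x, f x = y) -> bijective f.
Proof.
move=> fi fs; exists (fun y => projT1 (cid (fs y))).
  by move=> x; apply: fi; exact: (projT2 (cid (fs (f x)))).
by move=> y; exact: (projT2 (cid (fs y))).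
Qed.

Lemma enum_inf (T : Type) (A : set T) : countable A -> infinite_set A ->
  exists en : nat -> T, [/\ injective en, (forall n, A (en n)) &
                           (forall x, A x -> exists n, en n = x)].
Proof.
move=> cA iA; have := eq_card_nat cA iA; rewrite card_eq_sym.
move=> /card_bijP [f [g fg gf]].
have mT : forall n : nat, n \in [set: nat] by move=> n; apply: mem_set.
exists (fun n => val (f (SigSub (mT n)))); split.
- move=> n m /= /val_inj /(can_inj fg) h.
  by have := congr1 val h.
- by move=> n; case: (f _) => x /= /set_mem.
- move=> x Ax; pose a : A := SigSub (mem_set Ax).
  exists (val (g a)); rewrite /=.
  have -> : SigSub (mT (val (g a))) = g a.
    by case: (g a) => n pn; apply: val_inj.
  by rewrite gf.
Qed.

Lemma countable_of (Omega : Type) (e : nat -> Omega) :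
  bijective e -> forall A : set Omega, countable A.
Proof.
move=> [einv ee ei] A; apply/countable_injP; exists einv => x y _ _ h.
by rewrite -(ei x) h ei.
Qed.

Theorem lemma7p1 (Omega : Type)
  (Hcount : exists e : nat -> Omega, bijective e)
  (G : set (Omega -> Omega)) (HG : is_subgroup G)
  (alpha beta : nat -> Omega)
  (Halpha : injective alpha) (Hbeta : injective beta)
  (Hab : forall i j, alpha i <> beta j)
  (Hrich : forall gamma : nat -> Omega,
      (forall i, gamma i = alpha i \/ gamma i = beta i) ->
      exists2 g, G g & forall i, g (alpha i) = gamma i) :
  forall A0 : set (set Omega), is_A0 A0 -> preceq (part_stab A0) G.
Proof.
move=> A0 [[Hne [Hdisj Hcov]] [Hsing [Hpair Hkinds]]].
have [e ebij] := Hcount.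
have cnt := @countable_of _ _ ebij.
pose P := [set B | A0 B /\ pair_block B].
have cP : countable P.
  have [einv ee ei] := ebij.
  pose pick (B : set Omega) := match pselect (exists x, B x) with
    | left h => projT1 (cid h) | right _ => e 0 end.
  have pickP : forall B, B !=set0 -> B (pick B).
    move=> B hB; rewrite /pick; case: pselect => [h|[]] //.
    exact: (projT2 (cid h)).
  apply/countable_injP; exists (fun B => einv (pick B)) => B C.
  rewrite !inE => -[AB _] [AC _] h.
  apply: Hdisj => //; exists (pick B); split; first exact: pickP (Hne _ AB).
  by rewrite -(ei (pick B)) h ei; apply: pickP (Hne _ AC).
have [pe [pei peP peS]] := @enum_inf _ P cP Hpair.
have pxy : forall k, {xy : Omega * Omega | xy.1 <> xy.2 /\ pe k = [set xy.1; xy.2]}.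
  move=> k; apply: cid; have [_ [x [y [xy ->]]]] := peP k.
  by exists (x, y).
pose px k := (projT1 (pxy k)).1.
pose py k := (projT1 (pxy k)).2.
have pxyne : forall k, px k <> py k by move=> k; case: (projT2 (pxy k)).
have peE : forall k, pe k = [set px k; py k] by move=> k; case: (projT2 (pxy k)).
pose S0 := [set z | A0 [set z]].
have iS0 : infinite_set S0.
  move=> fS; apply: Hsing; apply: (sub_finite_set _ (finite_image (fun z => [set z]) fS)).
  by move=> B [AB [z Bz]]; exists z => //; rewrite /S0 /= -Bz.
have [sq [sqi sqS sqO]] := @enum_inf _ S0 (cnt S0) iS0.
pose T' := [set w | forall k, w <> alpha k.*2 /\ w <> beta k.*2].
have iT : infinite_set T'.
  move=> fT; apply: infinite_nat.
  have : finite_set ((fun n => alpha n.*2.+1) @` [set: nat]).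
    apply: sub_finite_set fT => _ [n _ <-] k; split => h.
      by move/Halpha: h; lia.
    exact: (Hab _ _ h).
  rewrite (eq_finite_set (inj_card_eq _)) // => x y _ _ /Halpha; lia.
have [tq [tqi tqS tqO]] := @enum_inf _ T' (cnt T') iT.

have peA : forall k, A0 (pe k) by move=> k; case: (peP k).
have pex : forall k, pe k (px k) by move=> k; rewrite peE; left.
have pey : forall k, pe k (py k) by move=> k; rewrite peE; right.
have notsp : forall k z, A0 [set z] -> pe k z -> False.
  move=> k z Az pz.
  have E : [set z] = pe k by apply: Hdisj => //; exists z.
  apply: (pxyne k); have : [set z] (px k) by rewrite E.
  have : [set z] (py k) by rewrite E.
  by move=> -> ->.
have pe_eq : forall k k' z, pe k z -> pe k' z -> k = k'.
  move=> k k' z h1 h2; apply: pei; apply: Hdisj => //; by exists z.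
pose enc1 (c : nat + nat * bool) :=
  match c with inl n => sq n | inr (k, b) => if b then py k else px k end.
have pe_enc : forall k b, pe k (enc1 (inr (k, b))) by move=> k [].
have enc1i : injective enc1.
  move=> [n|[k b]] [m|[k' b']].
  - by move/sqi => ->.
  - move=> /= h; exfalso; apply: (notsp k' (sq n)); first exact: sqS.
    by rewrite h; exact: pe_enc k' b'.
  - move=> /= h; exfalso; apply: (notsp k (sq m)); first exact: sqS.
    by rewrite -h; exact: pe_enc k b.
  - move=> h; have kk : k = k'.
      by apply: (pe_eq _ _ (enc1 (inr (k, b)))); [exact: pe_enc|rewrite h; exact: pe_enc].
    subst k'; move: h; case: b; case: b' => //= h.
      by case: (pxyne k).
    by case: (pxyne k).
have enc1s : forall z, exists c, enc1 c = z.
  move=> z; have [B [AB Bz]] := Hcov z; case: (Hkinds B AB) => [[w Bw]|pb].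
  - have S0z : S0 z.
      by move: Bz AB; rewrite Bw => -> .
    by have [n <-] := sqO z S0z; exists (inl n).
  - have [k pk] := peS B (conj AB pb); move: Bz; rewrite -pk peE => -[->|->].
      by exists (inr (k, false)).
    by exists (inr (k, true)).
pose enc2 (c : nat + nat * bool) :=
  match c with inl n => tq n | inr (k, b) => if b then beta k.*2 else alpha k.*2 end.
have enc2i : injective enc2.
  move=> [n|[k b]] [m|[k' b']].
  - by move/tqi => ->.
  - by have [] := tqS n k'; case: b' => /=.
  - move=> /= h; have [h1 h2] := tqS m k.
    by case: b h => h; [case: (h2 (esym h)) | case: (h1 (esym h))].
  - case: b; case: b' => /= h.
    + by move/Hbeta: h => h; have -> : k = k' by lia.
    + by case: (Hab _ _ (esym h)).
    + by case: (Hab _ _ h).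
    + by move/Halpha: h => h; have -> : k = k' by lia.
have enc2s : forall w, exists c, enc2 c = w.
  move=> w; case: (pselect (exists k, w = alpha k.*2 \/ w = beta k.*2)) => [[k [->|->]]|h].
  - by exists (inr (k, false)).
  - by exists (inr (k, true)).
  - have Tw : T' w by move=> k; split => ek; apply: h; exists k; [left|right].
    by have [n <-] := tqO w Tw; exists (inl n).
have [d1 c1a c1b] := @inj_surj_bij _ _ _ enc1i enc1s.
have [d2 c2a c2b] := @inj_surj_bij _ _ _ enc2i enc2s.
pose u := enc2 \o d1.
pose v := enc1 \o d2.
have uv : cancel u v by move=> z; rewrite /u /v /= c2a c1b.
have vu : cancel v u by move=> z; rewrite /u /v /= c1a c2b.
pose xE := xp _ alpha sE.
pose xO := xp _ alpha sO.
exists [set u; v; xE; xO]; split; first exact: finite_set4.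
split.
  move=> g [[[->|->]|->]|->].
  - by exists v.
  - by exists u.
  - exact: (@xp_bij _ alpha Halpha sE sE_inv).
  - exact: (@xp_bij _ alpha Halpha sO sO_inv).
move=> f [Sf fB] H HH GUH.
have [_ [_ [Hc _]]] := HH.
have GH : G `<=` H by move=> g Gg; apply: GUH; left.
have UH : forall g, [set u; v; xE; xO] g -> H g by move=> g Ug; apply: GUH; right.
have Hr : forall c, exists2 g, G g & forall i, g (alpha i) = gam _ alpha beta c i.
  move=> c; apply: Hrich => i; rewrite /gam; case: (c i); by [right|left].
have Gi : forall g, G g -> exists2 h, G h & cancel g h /\ cancel h g.
  by case: HG => _ [_ [_ Hi]].
pose Y k := `[< f (px k) = py k >].
have hS := @Sw_tgt _ alpha beta Halpha Hbeta Hab G H Y HH GH (UH _ (or_introl (or_intror erefl)))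
  (UH _ (or_intror erefl)) Hr Gi.
have Hu : H u by apply: UH; do 3 left.
have Hv : H v by apply: UH; left; left; right.
suff -> : f = v \o (Sw _ alpha beta (fun j => ~~ odd j && Y j./2) \o u).
  exact: (Hc _ _ (Hc _ _ Hu hS) Hv).
have finj : injective f by case: Sf => g fg _; exact: (can_inj fg).
have fsq : forall n, f (sq n) = sq n.
  move=> n; have := fB _ (sqS n) => E.
  have : [set sq n] (f (sq n)) by rewrite -E; exists (sq n).
  by [].
have fpe : forall k z, pe k z -> f z = px k \/ f z = py k.
  move=> k z pz; have := fB _ (peA k) => E.
  have : pe k (f z) by rewrite -E; exists z.
  by rewrite peE.
apply: funext => z; have [c <-] := enc1s z.
rewrite /= /u /v /= c1a.
case: c => [n|[k b]].
- have -> : Sw _ alpha beta (fun j => ~~ odd j && Y j./2) (tq n) = tq n.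
    case: (@ab_cases _ alpha beta (tq n)) => [[i hi]|[[i hi]|ho]].
    + rewrite hi (@SwA _ alpha beta Halpha); case: ifP => // /andP [oi _].
      have := tqS n i./2; rewrite hi; have -> : (i./2).*2 = i by lia.
      by case.
    + rewrite hi (@SwB _ alpha beta Hbeta Hab); case: ifP => // /andP [oi _].
      have := tqS n i./2; rewrite hi; have -> : (i./2).*2 = i by lia.
      by case.
    + by rewrite SwO.
  by rewrite -[tq n]/(enc2 (inl n)) c2a /= fsq.
- have tk : ~~ odd k.*2 && Y (k.*2)./2 = Y k by rewrite odd_double doubleK.
  case: b => /=.
  + rewrite (@SwB _ alpha beta Hbeta Hab) tk; case Yk: (Y k).
    * rewrite -[alpha k.*2]/(enc2 (inr (k, false))) c2a /=.
      move/asboolP: Yk => Yk.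
      by case: (fpe k (py k) (pey k)) => // h; case: (pxyne k); apply: finj; rewrite Yk h.
    * rewrite -[beta k.*2]/(enc2 (inr (k, true))) c2a /=.
      move/asboolP: Yk => Yk.
      have fx : f (px k) = px k by case: (fpe k (px k) (pex k)) => // h; case: Yk.
      case: (fpe k (py k) (pey k)) => // h; case: (pxyne k); apply: finj; by rewrite fx h.
  + rewrite (@SwA _ alpha beta Halpha) tk; case Yk: (Y k).
    * rewrite -[beta k.*2]/(enc2 (inr (k, true))) c2a /=.
      by move/asboolP: Yk.
    * rewrite -[alpha k.*2]/(enc2 (inr (k, false))) c2a /=.
      move/asboolP: Yk => Yk.
      by case: (fpe k (px k) (pex k)) => // h; case: Yk.
Qed.
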